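(* Let $G$ be a finite solvable group and $M$ a maximal subgroup of $G$. If $M$ is exponential in $G$, then $M \lhd G$.
   Context: A subgroup $H$ of finite index in a group $G$ is called exponential in $G$ if $x^{|G:H|} \in H$ for every $x \in G$. *)

(* Defs.v *)
From mathcomp Require Import all_boot all_fingroup all_solvable.
Set Implicit Arguments. Unset Strict Implicit. Unset Printing Implicit Defensive.
Local Open Scope group_scope.

Definition exponential (gT : finGroupType) (H G : {set gT}) : Prop :=
  forall x, x \in G -> x ^+ #|G : H| \in H.

(* Main.v *)
Require Import Defs.
From mathcomp Require Import all_boot all_fingroup all_solvable.
Local Open Scope group_scope.

Lemma ppow_index (gT : finGroupType) (G M : {group gT}) :
  solvable G -> maximal M G -> exists2 p, prime p & p.-nat #|G : M|.
Proof.
move=> solG maxM.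
have sMG : M \subset G := proper_sub (maxgroupp maxM).
pose N := [group of gcore M G].
have nNG : N <| G := gcore_normal sMG.
have sNM : N \subset M := gcore_sub _ _.
have nNM : N <| M := normalS sNM sMG nNG.
have maxMb : maximal (M / N) (G / N) by rewrite quotient_maximal.
have ntGb : G / N != 1.
  apply: contraTneq (maxgroupp maxMb) => ->.
  by rewrite properE sub1G andbF.
have [Lb minL sLG] := minnormal_exists ntGb (normG _).
have [nLG ntL abL] := minnormal_solvable minL sLG (quotient_sol N solG).
have [p pr_p pabL] := is_abelemP abL.
have notsLM : ~~ (Lb \subset M / N).
  apply/negP => sLM.
  have : coset N @*^-1 Lb \subset N.
    apply: gcore_max; first by rewrite -(quotientGK nNM) morphpreS.
    have : coset N @*^-1 Lb <| coset N @*^-1 (G / N).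
      by rewrite cosetpre_normal; apply/andP.
    by rewrite quotientGK // => /normal_norm.
  move/quotientS1; rewrite cosetpreK => L1.
  by rewrite L1 eqxx in ntL.
have nLM : M / N \subset 'N(Lb) := subset_trans (quotientS N sMG) nLG.
have defG : M / N * Lb = G / N.
  case/maxgroupP: maxMb => _ maxM'.
  apply/eqP; rewrite eqEproper mul_subG ?quotientS //= -norm_joinEl //.
  apply: contra notsLM => /maxM' <-; rewrite ?joing_subl ?joing_subr //.
exists p => //.
rewrite -(index_quotient_eq (H := N)) //; last first.
- exact: normal_norm.
- exact: subset_trans (subsetIr _ _) sNM.
rewrite -defG indexMg.
exact: pnat_dvd (dvdn_indexg _ _) (abelem_pgroup pabL).
Qed.

Theorem corollary4p5 (gT : finGroupType) (G M : {group gT}) :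
  solvable G -> maximal M G -> exponential M G -> M <| G.
Proof.
move=> solG maxM expM.
have sMG : M \subset G := proper_sub (maxgroupp maxM).
have [p pr_p pn] := @ppow_index _ G M solG maxM.
have p'M : forall x, x \in G -> p^'.-elt x -> x \in M.
  move=> x Gx p'x; have xnM := expM x Gx.
  have cop : coprime #[x] #|G : M| by rewrite coprime_sym (pnat_coprime pn p'x).
  have : generator <[x]> (x ^+ #|G : M|) by rewrite generator_coprime.
  by rewrite /generator => /eqP defx; rewrite -cycle_subG defx cycle_subG.
pose S := [set x in G | p^'.-elt x].
pose K := [group of <<S>>].
have sKM : K \subset M.
  by rewrite gen_subG; apply/subsetP => x; rewrite inE => /andP[Gx p'x]; apply: p'M.
have sKG : K \subset G.
  by rewrite gen_subG; apply/subsetP => x; rewrite inE => /andP[].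
have nKG : G \subset 'N(K).
  apply: norms_gen; apply/normsP => g Gg; apply/setP => y.
  by rewrite mem_conjg !inE p_eltJ groupJr ?groupV.
have nKG' : K <| G by apply/andP.
have nKM : K <| M := normalS sKM sMG nKG'.
have pG : p.-group (G / K).
  apply/pgroupP => q pr_q qdvd.
  have [xb Gxb oxb] := Cauchy pr_q qdvd.
  case/morphimP: Gxb oxb => x Nx Gx -> oxb.
  have : p.-elt (coset K x).
    have Nxp : x.`_p \in 'N(K) by rewrite groupX.
    have Nxp' : x.`_p^' \in 'N(K) by rewrite groupX.
    have Kxp' : x.`_p^' \in K.
      by apply: mem_gen; rewrite inE groupX // p_elt_constt.
    rewrite -(consttC p x) morphM //.
    rewrite [coset_morphism K x.`_p^']coset_id // mulg1.
    exact: morph_p_elt (p_elt_constt _ _).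
  by rewrite /p_elt oxb (pnatE _ pr_q).
have maxMb : maximal (M / K) (G / K) by rewrite quotient_maximal.
have := p_maximal_normal pG maxMb.
by rewrite -cosetpre_normal !quotientGK.
Qed.
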